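(* Let $A$ be an $n\times n$ complex matrix, let $B=A-\frac{\operatorname{tr}A}{n}I$, and let $r$ be a positive integer. Then $$\operatorname{spd}(A)^{2r}\le 2^{2r-1}\operatorname{tr}\big(B^r(B^* )^r\big).$$
   Context: For $A$ with eigenvalues $\lambda_1,\dots,\lambda_n$ (counted with multiplicity), the spread is $\operatorname{spd}(A)=\max_{i,j}|\lambda_i-\lambda_j|$. $B^*$ is the conjugate transpose of $B$. *)

(* Defs.v *)
From HB Require Import structures.
From mathcomp Require Import all_boot all_order all_algebra.
Set Implicit Arguments. Unset Strict Implicit. Unset Printing Implicit Defensive.
Import Order.TTheory GRing.Theory Num.Theory.
Local Open Scope ring_scope.

(* Eigenvalues of a square complex matrix, counted with multiplicity:
   a sequence s with char_poly A = \prod_(z <- s) ('X - z). *)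
Lemma eigvals_exists (C : numClosedFieldType) (n : nat) (A : 'M[C]_n) :
  exists s : seq C, char_poly A == \prod_(z <- s) ('X - z%:P).
Proof.
have [s Hs] := closed_field_poly_normal (char_poly A).
exists s; apply/eqP; rewrite Hs.
by have /monicP -> := char_poly_monic A; rewrite scale1r.
Qed.

Definition eigvals (C : numClosedFieldType) (n : nat) (A : 'M[C]_n) : seq C :=
  xchoose (eigvals_exists A).

Lemma eigvalsE (C : numClosedFieldType) (n : nat) (A : 'M[C]_n) :
  char_poly A = \prod_(z <- eigvals A) ('X - z%:P).
Proof. exact/eqP/(xchooseP (eigvals_exists A)). Qed.

(* spread: max_{i,j} |lambda_i - lambda_j| (0 for the empty matrix) *)
Definition spd (C : numClosedFieldType) (n : nat) (A : 'M[C]_n) : C :=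
  \big[Num.max/0]_(x <- eigvals A) \big[Num.max/0]_(y <- eigvals A) `|x - y|.

Definition adjmx (C : numClosedFieldType) (m n : nat) (B : 'M[C]_(m, n)) : 'M[C]_(n, m) :=
  map_mx Num.conj B^T.

(* Main.v *)
Require Import Defs.
From mathcomp Require Import all_boot all_order all_algebra.
From mathcomp Require Import spectral ring.
Set Implicit Arguments. Unset Strict Implicit. Unset Printing Implicit Defensive.
Import Order.TTheory GRing.Theory Num.Theory.
Local Open Scope ring_scope.

Lemma cheb (R : numDomainType) (m : nat) (a b : R) : 0 <= a -> 0 <= b ->
  (a + b) * (a ^+ m + b ^+ m) <= 2 * (a ^+ m.+1 + b ^+ m.+1).
Proof.
move=> a0 b0.
have H : 0 <= (a - b) * (a ^+ m - b ^+ m).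
  have /orP [ab|ba] := real_leVge (ger0_real a0) (ger0_real b0).
  - apply: mulr_le0; first by rewrite subr_le0.
    by rewrite subr_le0 lerXn2r.
  - apply: mulr_ge0; first by rewrite subr_ge0.
    by rewrite subr_ge0 lerXn2r.
rewrite -subr_ge0; apply: le_trans H _; rewrite le_eqVlt; apply/orP; left.
apply/eqP; rewrite !exprS; ring.
Qed.

Lemma convpow (R : numDomainType) (m : nat) (a b : R) : 0 <= a -> 0 <= b ->
  (a + b) ^+ m.+1 <= 2 ^+ m * (a ^+ m.+1 + b ^+ m.+1).
Proof.
move=> a0 b0; elim: m => [|m IH]; first by rewrite !expr1 expr0 mul1r.
rewrite exprS (@le_trans _ _ ((a + b) * (2 ^+ m * (a ^+ m.+1 + b ^+ m.+1))))//.
  by apply: ler_wpM2l => //; rewrite addr_ge0.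
rewrite mulrCA (exprSr 2 m) -mulrA; apply: ler_wpM2l; first by rewrite exprn_ge0.
exact: cheb.
Qed.

Lemma trig_mulmx (R : comPzRingType) n (S T : 'M[R]_n) :
  is_trig_mx S -> is_trig_mx T ->
  is_trig_mx (S *m T) /\ forall i, (S *m T) i i = S i i * T i i.
Proof.
move=> /is_trig_mxP HS /is_trig_mxP HT; split.
  apply/is_trig_mxP => i j ij; rewrite mxE big1 // => k _.
  have [ik|ki] := ltnP i k; first by rewrite HS ?mul0r.
  by rewrite HT ?mulr0 // (leq_ltn_trans ki ij).
move=> i; rewrite mxE (bigD1 i) //= big1 ?addr0 // => k ki.
have [ik|ki'] := ltnP i k; first by rewrite HS ?mul0r.
rewrite HT ?mulr0 //; rewrite ltn_neqAle ki' andbT.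
by apply: contra ki => /eqP h; apply/eqP/val_inj.
Qed.

Lemma trig_exp (R : comPzRingType) n (T : 'M[R]_n) (r : nat) :
  is_trig_mx T -> is_trig_mx (T ^+ r) /\ forall i, (T ^+ r) i i = T i i ^+ r.
Proof.
move=> HT; elim: r => [|r [IH1 IH2]].
  split; first by apply/is_trig_mxP => i j ij; rewrite expr0 mxE; case: eqP => // h; move: ij; rewrite h ltnn.
  by move=> i; rewrite expr0 mxE eqxx expr0.
rewrite exprS -mulmxE; have [H1 H2] := trig_mulmx HT IH1; split => // i.
by rewrite H2 IH2 exprS.
Qed.

Section S.
Variable C : numClosedFieldType.

Lemma adjmxM m n p (X : 'M[C]_(m, n)) (Y : 'M[C]_(n, p)) :
  adjmx (X *m Y) = adjmx Y *m adjmx X.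
Proof. by rewrite /adjmx trmx_mul map_mxM. Qed.

Lemma adjmxK m n (X : 'M[C]_(m, n)) : adjmx (adjmx X) = X.
Proof. by apply/matrixP => i j; rewrite !mxE conjCK. Qed.

Lemma adjmx1 n : adjmx (1%:M : 'M[C]_n) = 1%:M.
Proof. by apply/matrixP => i j; rewrite !mxE eq_sym; case: eqP; rewrite ?conjC1 ?conjC0. Qed.

Lemma adjmx_exp n (X : 'M[C]_n) r : (adjmx X) ^+ r = adjmx (X ^+ r).
Proof.
elim: r => [|r IH]; first by rewrite !expr0 adjmx1.
by rewrite exprS IH (exprSr X) -!mulmxE adjmxM.
Qed.

Lemma conj_exp n (V W X : 'M[C]_n) (r : nat) : W *m V = 1%:M -> V *m W = 1%:M ->
  (V *m X *m W) ^+ r = V *m X ^+ r *m W.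
Proof.
move=> HU HV; elim: r => [|r IH]; first by rewrite !expr0 mulmx1 HV.
rewrite exprS IH -!mulmxE !mulmxA -[V *m X *m W *m V]mulmxA HU mulmx1.
by rewrite exprS -mulmxE !mulmxA.
Qed.

Lemma tr_adj n (M : 'M[C]_n) :
  \tr (M *m adjmx M) = \sum_i \sum_j `|M i j| ^+ 2.
Proof.
rewrite /mxtrace; apply: eq_bigr => i _; rewrite mxE; apply: eq_bigr => j _.
by rewrite normCK !mxE.
Qed.

Lemma bigmax_cases (T : eqType) (s : seq T) (F : T -> C) :
  \big[Num.max/0]_(x <- s) F x = 0 \/
  exists2 x, x \in s & \big[Num.max/0]_(x <- s) F x = F x.
Proof.
elim: s => [|a s IH]; first by left; rewrite big_nil.
rewrite big_cons; set m := \big[_/_]_(_ <- _) _ in IH *.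
rewrite /Num.max /Order.max; case: ifP => _.
  case: IH => [->|[x xs ->]]; first by left.
  by right; exists x => //; rewrite inE xs orbT.
by right; exists a => //; rewrite inE eqxx.
Qed.
End S.

Theorem theorem3p3 (C : numClosedFieldType) (n : nat) (A : 'M[C]_n) (r : nat)
  (hn : (0 < n)%N) (hr : (0 < r)%N) :
  let B := A - (\tr A / n%:R)%:M in
  spd A ^+ (2 * r) <= 2 ^+ (2 * r - 1) * \tr (B ^+ r *m (adjmx B) ^+ r).
Proof.
cbv zeta. set B := A - (\tr A / n%:R)%:M.
set mu := \tr A / n%:R.
have [P Pu HT] := Schur A hn.
have HPP : P *m adjmx P = 1%:M by apply/unitarymxP.
have HP'P : adjmx P *m P = 1%:M by apply: mulmx1C.
set T := conjmx P A in HT.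
have HTt : is_trig_mx T := HT.
have HTz := HTt; move/is_trig_mxP in HTz.
have TE : T = P *m A *m adjmx P by rewrite /T /conjmx pinvmx_unitary.
set TB := P *m B *m adjmx P.
have TBE : TB = T - mu%:M.
  by rewrite /TB /B mulmxBr mulmxBl TE mul_mx_scalar -scalemxAl HPP scalemx1.
have TBt : is_trig_mx TB.
  apply/is_trig_mxP => i j ij; rewrite TBE mxE HTz // mxE.
  by rewrite mxE; case: eqP => [h|]; [move: ij; rewrite h ltnn | rewrite mulr0n subr0].
have TBd i : TB i i = T i i - mu by rewrite TBE mxE; congr (_ + _); rewrite !mxE eqxx mulr1n.
have BE : B = adjmx P *m TB *m P.
  by rewrite /TB !mulmxA HP'P mul1mx -mulmxA HP'P mulmx1.
clearbody TB.
have eigT x : x \in eigvals A -> exists i, x = T i i.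
  move=> xin.
  have : eigenvalue A x by rewrite eigenvalue_root_char eigvalsE root_prod_XsubC.
  move=> /eigenvalueP [v vA v0].
  have : eigenvalue T x.
    apply/eigenvalueP; exists (v *m adjmx P).
      by rewrite TE !mulmxA -(mulmxA v) HP'P mulmx1 vA scalemxAl.
    apply: contra v0 => /eqP h; apply/eqP.
    by rewrite -(mulmx1 v) -HP'P mulmxA h mul0mx.
  rewrite eigenvalue_root_char char_poly_trig // /root horner_prod.
  move=> /prodf_eq0 [i _]; rewrite hornerXsubC subr_eq0 => /eqP ->.
  by exists i.
set M := TB ^+ r.
have [Mt Md] := trig_exp r TBt.
have trE : \tr (B ^+ r *m adjmx B ^+ r) = \sum_i \sum_j `|M i j| ^+ 2.
  rewrite -tr_adj /M BE !adjmxM adjmxK mulmxA conj_exp // conj_exp //.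
  rewrite !mulmxA -(mulmxA _ P) HPP mulmx1 -adjmx_exp.
  by rewrite mxtrace_mulC !mulmxA HPP mul1mx.
have S0 : 0 <= \sum_i \sum_j `|M i j| ^+ 2 :> C.
  by apply: sumr_ge0 => i _; apply: sumr_ge0 => j _; rewrite exprn_ge0.
have R0 : 0 <= 2 ^+ (2 * r - 1) * \tr (B ^+ r *m adjmx B ^+ r).
  by rewrite trE mulr_ge0 // exprn_ge0.
have e2r : (2 * r)%N = (2 * r - 1).+1 by rewrite subn1 prednK // muln_gt0.
have z0 : (0:C) ^+ (2 * r) = 0 by rewrite e2r exprS mul0r.
have key x y : x \in eigvals A -> y \in eigvals A ->
  `|x - y| ^+ (2 * r) <= 2 ^+ (2 * r - 1) * \tr (B ^+ r *m adjmx B ^+ r).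
  move=> /eigT [i ->] /eigT [j ->].
  have [ij|ij] := eqVneq i j.
    by rewrite ij subrr normr0 z0.
  have -> : T i i - T j j = TB i i - TB j j by rewrite !TBd; ring.
  apply: (le_trans (y := (`|TB i i| + `|TB j j|) ^+ (2 * r))).
    by rewrite lerXn2r ?nnegrE ?addr_ge0 // ler_normB.
  rewrite [in X in X <= _]e2r; apply: le_trans (convpow _ _ _) _ => //.
  apply: ler_wpM2l; first by rewrite exprn_ge0.
  rewrite -e2r trE.
  have -> : `|TB i i| ^+ (2 * r) = `|M i i| ^+ 2 by rewrite Md normrX -exprM mulnC.
  have -> : `|TB j j| ^+ (2 * r) = `|M j j| ^+ 2 by rewrite Md normrX -exprM mulnC.
  have Hk k : `|M k k| ^+ 2 <= \sum_l `|M k l| ^+ 2.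
    rewrite (bigD1 k) //= lerDl; apply: sumr_ge0 => l _; exact: exprn_ge0.
  have ji : j != i by rewrite eq_sym.
  rewrite (bigD1 i) //= [X in _ <= _ + X](bigD1 j) //= addrA.
  apply: le_trans (_ : _ <= \sum_(j0 < n) `|M i j0| ^+ 2 + \sum_(j0 < n) `|M j j0| ^+ 2) _.
    by apply: lerD.
  rewrite lerDl.
  by apply: sumr_ge0 => k _; apply: sumr_ge0 => l _; exact: exprn_ge0.
rewrite /spd.
case: (bigmax_cases (eigvals A) (fun x => \big[Num.max/0]_(y <- eigvals A) `|x - y|)) => [->|[x xin ->]].
  by rewrite z0.
case: (bigmax_cases (eigvals A) (fun y => `|x - y|)) => [->|[y yin ->]].
  by rewrite z0.
exact: key.
Qed.
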